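(* Let $\mathcal{V}$ be a finite vocabulary with $|\mathcal{V}|=N$, let $\varepsilon>0$, and let $L_1,\dots,L_m$ be lists, each containing every word of $\mathcal{V}$ exactly once; let $\Phi^l:\mathcal{V}\to\{0,\dots,N-1\}$ be the bijection giving the index of a word in $L_l$, and $d^l_{\mathcal{V}}(w,w')=|\Phi^l(w)-\Phi^l(w')|$. Put $d_{\max}(w,w')=\max_{1\le l\le m} d^l_{\mathcal{V}}(w,w')$. Define the word-level randomized mechanism $\mathcal{M}:\mathcal{V}\to\mathcal{V}$ as follows: on input $w$, for each $l$ independently draw $X_l$ from the two-sided geometric distribution with $\mathbb{P}[X_l=x]=\frac{e^{\varepsilon}-1}{e^{\varepsilon}+1}e^{-\varepsilon|x|}$ ($x\in\mathbb{Z}$), set $w'_l=(\Phi^l)^{-1}(t(\Phi^l(w)+X_l))$ where $t$ clamps an integer to $\{0,\dots,N-1\}$ (values below $0$ become $0$, values above $N-1$ become $N-1$), and output one of $w'_1,\dots,w'_m$ chosen uniformly at random. Extend $\mathcal{M}$ to sentences $s=w_1\cdots w_n\in\mathcal{V}^n$ by applying it independently to each word, so that $\mathbb{P}[\mathcal{M}(s)=z_1\cdots z_n]=\prod_{i=1}^n\mathbb{P}[\mathcal{M}(w_i)=z_i]$, and for $s=w_1\cdots w_n$, $s'=w'_1\cdots w'_n$ define $\mathcal{D}(s,s')=\sum_{i=1}^n d_{\max}(w_i,w'_i)$. Then for all $n$, all $s,s',z\in\mathcal{V}^n$, $$\frac{\mathbb{P}[\mathcal{M}(s)=z]}{\mathbb{P}[\mathcal{M}(s')=z]}\le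 \exp\big(\varepsilon\,\mathcal{D}(s,s')\big).$$
   Context: Sentences are finite sequences (concatenations) of words from $\mathcal{V}$; $\mathcal{V}^n$ denotes sentences of length $n$. *)

(* Defs.v *)
From HB Require Import structures.
From mathcomp Require Import all_boot all_order all_algebra.
From mathcomp Require Import all_classical all_reals all_analysis.
Set Implicit Arguments. Unset Strict Implicit. Unset Printing Implicit Defensive.
Import Order.TTheory GRing.Theory Num.Theory.
Local Open Scope ring_scope.

Section Mech.
Variables (R : realType) (V : finType) (N m : nat) (eps : R).
Variable Phi : 'I_m -> V -> 'I_N.

Definition geom_pmf (x : int) : R :=
  (expR eps - 1) / (expR eps + 1) * expR (- eps * (`|x|%:R)).

(* P[X in E] = sum over x in Z of [x in E] P[X = x]  (series over Z,
   enumerated as 0, -1, 1, -2, 2, ...) *)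
Definition prob_geom (E : int -> bool) : R :=
  limn (fun n => \sum_(0 <= k < n)
     ((E (k%:Z) : nat)%:R * geom_pmf (k%:Z) +
      (E (- (k%:Z) - 1) : nat)%:R * geom_pmf (- (k%:Z) - 1))).

Definition clamp (k : int) : nat :=
  if (k < 0)%R then 0%N else minn `|k|%N N.-1.

Definition Phi_inv (l : 'I_m) (j : nat) : option V :=
  [pick v | (Phi l v : nat) == j].

Definition mech_word (w z : V) : R :=
  (m%:R)^-1 * \sum_(l < m)
     prob_geom (fun x => Phi_inv l (clamp ((Phi l w : nat)%:Z + x)) == Some z).

Definition mech_sent (n : nat) (s z : n.-tuple V) : R :=
  \prod_(i < n) mech_word (tnth s i) (tnth z i).

Definition d_max (w w' : V) : nat :=
  \max_(l < m) `|(Phi l w : nat)%:Z - (Phi l w' : nat)%:Z|%N.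

Definition D_sent (n : nat) (s s' : n.-tuple V) : nat :=
  \sum_(i < n) d_max (tnth s i) (tnth s' i).

End Mech.

(* Main.v *)
Require Import Defs.
Set Warnings "-all".
From HB Require Import structures.
From mathcomp Require Import all_boot all_order all_algebra.
From mathcomp Require Import all_classical all_reals all_analysis.
From mathcomp Require Import zify ring lra.
Import numFieldNormedType.Exports.
Import Order.TTheory GRing.Theory Num.Theory.
Local Open Scope ring_scope.

Section Aux.
Variables (R : realType) (eps : R).
Hypothesis eps_gt0 : 0 < eps.

Definition P (f : int -> R) (n : nat) : R :=
  \sum_(0 <= k < n) (f k%:Z + f (- k%:Z - 1)).

Let p := geom_pmf eps.

Lemma C_ge0 : 0 <= (expR eps - 1) / (expR eps + 1).
Proof.
have h := expR_ge1Dx eps.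
move: eps_gt0 => e0; apply: divr_ge0; lra.
Qed.

Lemma pmf_ge0 x : 0 <= p x.
Proof. by rewrite /p /geom_pmf; apply: mulr_ge0; [exact: C_ge0| exact: expR_ge0]. Qed.

Lemma eq_le_sub {a b : R} : a <= b -> 0 <= b - a.
Proof. by rewrite subr_ge0. Qed.

Lemma pmf_shift x : p x <= expR eps * p (x + 1).
Proof.
rewrite /p /geom_pmf mulrCA; apply: ler_wpM2l; first exact: C_ge0.
rewrite -expRD ler_expR.
have h : (absz (x + 1)%R <= absz x + 1)%N by lia.
have : (absz (x + 1))%:R <= (absz x)%:R + 1 :> R by move: h; rewrite -(ler_nat R) natrD.
move=> h2; have := mulr_ge0 (ltW eps_gt0) (eq_le_sub h2); lra.
Qed.

Lemma pmf_shiftN x : p x <= expR eps * p (x - 1).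
Proof.
rewrite /p /geom_pmf mulrCA; apply: ler_wpM2l; first exact: C_ge0.
rewrite -expRD ler_expR.
have h : (absz (x - 1)%R <= absz x + 1)%N by lia.
have : (absz (x - 1))%:R <= (absz x)%:R + 1 :> R by move: h; rewrite -(ler_nat R) natrD.
move=> h2; have := mulr_ge0 (ltW eps_gt0) (eq_le_sub h2); lra.
Qed.

Lemma P_ext_le (f : int -> R) n : (forall x, 0 <= f x) -> P f n <= P f n.+1.
Proof.
move=> f0; rewrite /P big_nat_recr //= lerDl.
by apply: addr_ge0.
Qed.

Lemma P_mono (f : int -> R) : (forall x, 0 <= f x) ->
  {homo P f : n m / (n <= m)%N >-> n <= m}.
Proof.
move=> f0 n m nm; rewrite /P (big_cat_nat (leq0n n) nm) /= lerDl.
by apply: sumr_ge0 => i _; apply: addr_ge0.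
Qed.

Lemma sum_nat_ext (f : nat -> R) n : (forall k, 0 <= f k) ->
  \sum_(0 <= k < n) f k <= \sum_(0 <= k < n.+1) f k.
Proof. by move=> f0; rewrite big_nat_recr //= lerDl. Qed.

Lemma P_shift (g h : int -> R) K n : (forall x, 0 <= g x) -> 0 <= K ->
  (forall x, h x <= K * g (x + 1)) -> P h n <= K * P g n.+1.
Proof.
move=> g0 K0 hg.
apply: (@le_trans _ _ (\sum_(0 <= k < n) K * (g (k%:Z + 1) + g (- k%:Z)))).
  apply: ler_sum => k _; rewrite mulrDr; apply: lerD; first exact: hg.
  by have := hg (- k%:Z - 1); rewrite subrK.
rewrite -mulr_sumr; apply: ler_wpM2l => //.
rewrite big_split /= /P big_split /=.
rewrite big_nat_recl //.
have e1 : \sum_(0 <= i < n) g (i.+1)%:Z = \sum_(0 <= k < n) g (k%:Z + 1).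
  by apply: eq_bigr => k _; rewrite -addn1 PoszD.
rewrite e1 (addrC (g 0)) -addrA lerD2l.
apply: (@le_trans _ _ (\sum_(0 <= k < n.+1) g (- k%:Z))).
  by apply: sum_nat_ext => k; apply: g0.
rewrite [X in X <= _]big_nat_recl //= oppr0 lerD2l.
have e2 : \sum_(0 <= i < n) g (- (i.+1)%:Z) = \sum_(0 <= k < n) g (- k%:Z - 1).
  by apply: eq_bigr => k _; rewrite -addn1 PoszD opprD.
rewrite e2; apply: sum_nat_ext => k; apply: g0.
Qed.

Lemma P_refl (f : int -> R) n : P (fun x => f (- x - 1)) n = P f n.
Proof.
rewrite /P; apply: eq_bigr => k _.
have -> : - (- k%:Z - 1) - 1 = k%:Z by ring.
by rewrite addrC.
Qed.


Let Ep (E : int -> bool) := fun x => (E x : nat)%:R * p x.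

Lemma Ep_ge0 E x : 0 <= Ep E x.
Proof. by rewrite /Ep; apply: mulr_ge0; [exact: ler0n| exact: pmf_ge0]. Qed.

Lemma Ep_le E x : Ep E x <= p x.
Proof. by rewrite /Ep; case: (E x); rewrite ?mul1r ?mul0r //; exact: pmf_ge0. Qed.

Let C := (expR eps - 1) / (expR eps + 1).
Let q := expR (- eps).

Lemma pq_bound k : p k%:Z + p (- k%:Z - 1) <= 2 * C * q ^+ k.
Proof.
have e1 : p k%:Z = C * q ^+ k by rewrite /p /geom_pmf /= expRM_natr.
have ek : absz (- k%:Z - 1) = k.+1 by lia.
have e2 : p (- k%:Z - 1) <= C * q ^+ k.
  rewrite /p /geom_pmf ek -expRM_natr; apply: ler_wpM2l; first exact: C_ge0.
  rewrite ler_expR -natr1 mulrDr mulr1 gerDl oppr_le0; exact: ltW.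
rewrite e1; lra.
Qed.

Lemma geo_sum n : \sum_(0 <= k < n) q ^+ k <= 1 / (1 - q).
Proof.
have q1 : q < 1 by rewrite /q expR_lt1 oppr_lt0.
have q0 : 0 <= q ^+ n by rewrite exprn_ge0 // expR_ge0.
rewrite big_mkord; set s := \sum_(i < n) q ^+ i.
have e := subrX1 q n; rewrite -/s in e.
rewrite ler_pdivlMr; last by lra.
have -> : s * (1 - q) = - ((q - 1) * s) by ring.
rewrite -e; lra.
Qed.

Lemma P_bound E n : P (Ep E) n <= 2 * C * (1 / (1 - q)).
Proof.
apply: (@le_trans _ _ (\sum_(0 <= k < n) 2 * C * q ^+ k)).
  apply: ler_sum => k _; apply: le_trans (pq_bound k); apply: lerD; exact: Ep_le.
rewrite -mulr_sumr; apply: ler_wpM2l; last exact: geo_sum.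
by apply: mulr_ge0 => //; exact: C_ge0.
Qed.

Lemma cvg_P E : cvgn (P (Ep E) : R^nat).
Proof.
apply: nondecreasing_is_cvgn; first by apply: P_mono; exact: Ep_ge0.
by exists (2 * C * (1 / (1 - q))) => _ [n _ <-]; exact: P_bound.
Qed.

Lemma prob_eq E : prob_geom eps E = limn (P (Ep E)).
Proof. by []. Qed.

Lemma prob_ge0 E : 0 <= prob_geom eps E.
Proof.
rewrite prob_eq; apply: le_trans _ (nondecreasing_cvgn_le (@P_mono (Ep E) (Ep_ge0 E)) (cvg_P E) 0).
by rewrite /P big_geq.
Qed.

Lemma prob_shift1 E : prob_geom eps (fun x => E (x + 1)) <= expR eps * prob_geom eps E.
Proof.
rewrite !prob_eq; apply: limr_le; first exact: (cvg_P (fun x => E (x + 1))).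
apply: nearW => n.
apply: le_trans (@P_shift (Ep E) _ (expR eps) n (Ep_ge0 E) (expR_ge0 eps) _) _.
  by move=> x; rewrite /Ep [X in _ <= X]mulrCA; apply: ler_wpM2l; [exact: ler0n| exact: pmf_shift].
apply: ler_wpM2l; first exact: expR_ge0.
exact: (nondecreasing_cvgn_le (@P_mono (Ep E) (Ep_ge0 E)) (cvg_P E)).
Qed.

Lemma prob_shiftN1 E : prob_geom eps (fun x => E (x - 1)) <= expR eps * prob_geom eps E.
Proof.
rewrite !prob_eq; apply: limr_le; first exact: (cvg_P (fun x => E (x - 1))).
apply: nearW => n.
rewrite -P_refl.
have g0 : forall y, 0 <= Ep E (- y - 1) by move=> y; exact: Ep_ge0.
apply: le_trans (@P_shift _ _ (expR eps) n g0 (expR_ge0 eps) _) _.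
  move=> x; rewrite /Ep [X in _ <= X]mulrCA.
  have -> : - (x + 1) - 1 = - x - 1 - 1 by ring.
  by apply: ler_wpM2l; [exact: ler0n| exact: pmf_shiftN].
rewrite (P_refl (Ep E)).
apply: ler_wpM2l; first exact: expR_ge0.
exact: (nondecreasing_cvgn_le (@P_mono (Ep E) (Ep_ge0 E)) (cvg_P E)).
Qed.

Lemma prob_ext E1 E2 : E1 =1 E2 -> prob_geom eps E1 = prob_geom eps E2.
Proof. by move=> h; rewrite (funext h). Qed.

Lemma prob_shift_nat c E :
  prob_geom eps (fun x => E (x + c%:Z)) <= expR (eps * c%:R) * prob_geom eps E.
Proof.
elim: c E => [|c IH] E.
  by rewrite mulr0 expR0 mul1r (@prob_ext _ E) // => x; rewrite addr0.
rewrite (@prob_ext _ (fun x => (fun y => E (y + c%:Z)) (x + 1))); last first.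
  by move=> x /=; congr E; lia.
apply: le_trans (prob_shift1 (fun y => E (y + c%:Z))) _.
rewrite -natr1 mulrDr mulr1 expRD [expR (eps * _) * _]mulrC -mulrA.
by apply: ler_wpM2l; [exact: expR_ge0| exact: IH].
Qed.

Lemma prob_shiftN_nat c E :
  prob_geom eps (fun x => E (x - c%:Z)) <= expR (eps * c%:R) * prob_geom eps E.
Proof.
elim: c E => [|c IH] E.
  by rewrite mulr0 expR0 mul1r (@prob_ext _ E) // => x; rewrite subr0.
rewrite (@prob_ext _ (fun x => (fun y => E (y - c%:Z)) (x - 1))); last first.
  by move=> x /=; congr E; lia.
apply: le_trans (prob_shiftN1 (fun y => E (y - c%:Z))) _.
rewrite -natr1 mulrDr mulr1 expRD [expR (eps * _) * _]mulrC -mulrA.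
by apply: ler_wpM2l; [exact: expR_ge0| exact: IH].
Qed.

Lemma prob_shift_int E a a' :
  prob_geom eps (fun x => E (a + x)) <=
  expR (eps * (absz (a - a'))%:R) * prob_geom eps (fun x => E (a' + x)).
Proof.
set c := absz (a - a').
case: (lerP a' a) => h.
  rewrite (@prob_ext _ (fun x => (fun y => E (a' + y)) (x + c%:Z))).
    exact: prob_shift_nat.
  by move=> x /=; congr E; rewrite /c; lia.
rewrite (@prob_ext _ (fun x => (fun y => E (a' + y)) (x - c%:Z))).
  exact: prob_shiftN_nat.
by move=> x /=; congr E; rewrite /c; lia.
Qed.

Lemma word_ge0 (V : finType) N m (Phi : 'I_m -> V -> 'I_N) w z :
  0 <= mech_word eps Phi w z.
Proof.
rewrite /mech_word; apply: mulr_ge0; first by rewrite invr_ge0 ler0n.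
by apply: sumr_ge0 => l _; exact: prob_ge0.
Qed.

Lemma word_bound (V : finType) N m (Phi : 'I_m -> V -> 'I_N) w w' z :
  mech_word eps Phi w z <= expR (eps * (d_max Phi w w')%:R) * mech_word eps Phi w' z.
Proof.
rewrite /mech_word mulrCA; apply: ler_wpM2l; first by rewrite invr_ge0 ler0n.
rewrite mulr_sumr; apply: ler_sum => l _.
apply: le_trans (prob_shift_int (fun y => Phi_inv Phi l (clamp N y) == Some z) _ ((Phi l w' : nat)%:Z)) _.
apply: ler_wpM2r; first exact: prob_ge0.
rewrite ler_expR; apply: ler_wpM2l; first exact: ltW.
rewrite ler_nat /d_max.
exact: (@leq_bigmax _ (fun l => `|(Phi l w : nat)%:Z - (Phi l w' : nat)%:Z|%N) l).
Qed.

End Aux.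



Theorem theorem3p2 (R : realType) (V : finType) (N m : nat) (eps : R)
  (Phi : 'I_m -> V -> 'I_N) :
  #|V| = N -> 0 < eps -> (0 < m)%N -> (forall l, bijective (Phi l)) ->
  forall (n : nat) (s s' z : n.-tuple V),
    mech_sent eps Phi s z / mech_sent eps Phi s' z
      <= expR (eps * (D_sent Phi s s')%:R).
Proof.
move=> _ eps0 _ _ n s s' z.
have key : mech_sent eps Phi s z <=
    expR (eps * (D_sent Phi s s')%:R) * mech_sent eps Phi s' z.
  rewrite /mech_sent /D_sent natr_sum mulr_sumr expR_sum -big_split /=.
  apply: ler_prod => i _; apply/andP; split.
    exact: word_ge0.
  exact: word_bound.
have hs' : 0 <= mech_sent eps Phi s' z.
  by apply: prodr_ge0 => i _; exact: word_ge0.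
case: (eqVneq (mech_sent eps Phi s' z) 0) => [->|nz].
  by rewrite invr0 mulr0 expR_ge0.
by rewrite ler_pdivrMr // lt_def nz hs'.
Qed.
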